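(* Let $Q,\tau$ be positive even integers and let $A$ and $Z$ be $0$-$1$ matrices of dimensions $\frac{Q}{2}\times\frac{\tau}{2}$, where $A$ is fixed and the entries of $Z$ are i.i.d. $0$-$1$ random variables with $\mathbb{E}(z_{ij})=\lambda$. If $\lambda<\frac{2}{\tau}$, then $$\mathbb{E}\big(w(I(A\wedge Z))\big)\ge\frac{\lambda}{2}\cdot w(A).$$
   Context: For a $0$-$1$ matrix $X$, $w(X)$ denotes the number of entries equal to $1$. $I(X)$ is the $0$-$1$ matrix of the same dimensions that keeps only the first nonzero entry in each row of $X$: $I(X)_{i,j}=1$ iff $X_{i,j}=1$ and $X_{i,\ell}=0$ for every $\ell<j$, and $I(X)_{i,j}=0$ otherwise. $A\wedge Z$ is the coordinate-wise conjunction (product) of $A$ and $Z$. *)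

(* Defs.v *)
From HB Require Import structures.
From mathcomp Require Import all_boot all_order all_algebra.
Set Implicit Arguments. Unset Strict Implicit. Unset Printing Implicit Defensive.
Import Order.TTheory GRing.Theory Num.Theory.

(* 0-1 matrices are boolean matrices; true = 1. *)

Definition weight m n (X : 'M[bool]_(m, n)) : nat :=
  #|[set ij : 'I_m * 'I_n | X ij.1 ij.2]|.

Definition first_ones m n (X : 'M[bool]_(m, n)) : 'M[bool]_(m, n) :=
  \matrix_(i, j) (X i j && [forall l : 'I_n, (l < j)%N ==> ~~ X i l]).

Definition mx_and m n (A Z : 'M[bool]_(m, n)) : 'M[bool]_(m, n) :=
  \matrix_(i, j) (A i j && Z i j).

Local Open Scope ring_scope.

Definition iid_bern_prob (R : nzRingType) (lam : R) m n (Z : 'M[bool]_(m, n)) : R :=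
  \prod_(i < m) \prod_(j < n) (if Z i j then lam else 1 - lam).

Definition iid_bern_expect (R : nzRingType) (lam : R) m n
    (f : 'M[bool]_(m, n) -> R) : R :=
  \sum_(Z : 'M[bool]_(m, n)) iid_bern_prob lam Z * f Z.

(* Main.v *)
Require Import Defs.
From mathcomp Require Import all_boot all_order all_algebra.
From mathcomp Require Import ring lra.
Import Order.TTheory GRing.Theory Num.Theory.
Local Open Scope ring_scope.

Lemma sum_mx_prod (R : comNzRingType) m n (G : 'I_m -> 'I_n -> bool -> R) :
  \sum_(Z : 'M[bool]_(m, n)) \prod_i \prod_j G i j (Z i j)
  = \prod_i \prod_j (G i j true + G i j false).
Proof.
have -> : \prod_i \prod_j (G i j true + G i j false)
   = \prod_(p : 'I_m * 'I_n) \sum_(b : bool) G p.1 p.2 b.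
  rewrite pair_big; apply: eq_bigr => p _.
  by rewrite big_bool /= addrC.
rewrite bigA_distr_bigA /=.
rewrite (reindex (@Matrix bool m n)) /=; last first.
  by exists (@mx_val bool m n) => [f _|[f] _].
apply: eq_bigr => f _; rewrite pair_big /=.
by apply: eq_bigr => -[i j] _.
Qed.
Lemma weightE m n (X : 'M[bool]_(m, n)) :
  weight X = (\sum_i \sum_j (X i j : nat))%N.
Proof.
rewrite /weight -sum1_card pair_big /= big_mkcond /=.
by apply: eq_bigr => -[i j] _; rewrite inE /=; case: (X i j).
Qed.

Lemma first_row m n (X : 'M[bool]_(m, n)) i :
  (\sum_j (first_ones X i j : nat))%N = [exists j, X i j].
Proof.
case: existsP => [[j0 Xj0]|nX]; last first.
  rewrite big1 // => j _; rewrite mxE; case Xj: (X i j) => //; by exfalso; apply: nX; exists j.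
case: (arg_minnP (fun j : 'I_n => nat_of_ord j) Xj0) => k Xk kmin.
rewrite (bigD1 k) //= big1 ?addn0.
  rewrite mxE Xk /=; case: forallP => // H; exfalso; apply: H => l; apply/implyP => lk.
  by apply/negP => Xl; have := kmin l Xl; rewrite leqNgt lk.
move=> j jk; rewrite mxE; case Xj: (X i j) => //=.
case: forallP => // H; exfalso.
have kj := kmin j Xj.
have : (k < j)%N by rewrite ltn_neqAle kj andbT; apply: contra jk => /eqP/val_inj ->.
by move=> kj'; have := implyP (H k) kj'; rewrite Xk.
Qed.

Local Open Scope ring_scope.

Lemma prod_bound (R : realFieldType) (I : Type) (r : seq I) (x : I -> R) :
  (forall i, 0 <= x i <= 1) ->
  \prod_(i <- r) (1 - x i) <= 1 - \sum_(i <- r) x i + (\sum_(i <- r) x i) ^+ 2 / 2.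
Proof.
move=> hx; elim: r => [|a r IH]; first by rewrite !big_nil expr0n /= mul0r addr0 subr0.
rewrite !big_cons.
have /andP [h0 h1] := hx a.
have s0 : 0 <= \sum_(i <- r) x i by apply: sumr_ge0 => i _; have /andP[] := hx i.
set s := \sum_(i <- r) x i in IH s0 *; set P := \prod_(i <- r) _ in IH *.
have hP : (1 - x a) * P <= (1 - x a) * (1 - s + s ^+ 2 / 2).
  by apply: ler_wpM2l; rewrite ?subr_ge0.
apply: le_trans hP _.
rewrite -subr_ge0.
have -> : 1 - (x a + s) + (x a + s) ^+ 2 / 2 - (1 - x a) * (1 - s + s ^+ 2 / 2)
   = x a * (x a + s ^+ 2) / 2 by field.
by apply: divr_ge0 => //; apply: mulr_ge0 => //; apply: addr_ge0; rewrite ?sqr_ge0.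
Qed.

Lemma indic (R : comNzRingType) n (f : 'I_n -> bool) :
  (([exists j, f j] : nat)%:R : R) = 1 - \prod_j (if f j then 0 else 1).
Proof.
case: existsP => [[j0 fj0]|nf].
by rewrite (bigD1 j0) //= fj0 mul0r subr0.
rewrite big1 ?subrr // => j _; case fj: (f j) => //; by exfalso; apply: nf; exists j.
Qed.

Lemma expect_row (R : realFieldType) (lam : R) m n (A : 'M[bool]_(m, n)) i0 :
  \sum_(Z : 'M[bool]_(m, n)) iid_bern_prob lam Z *
      \prod_j (if A i0 j && Z i0 j then 0 else 1)
  = \prod_j (1 - (if A i0 j then lam else 0)).
Proof.
pose G i j (b : bool) : R := (if b then lam else 1 - lam) *
   (if (i == i0) && A i j && b then 0 else 1).
have E1 : forall Z : 'M[bool]_(m, n), iid_bern_prob lam Z *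
      \prod_j (if A i0 j && Z i0 j then 0 else 1) = \prod_i \prod_j G i j (Z i j).
  move=> Z; rewrite /G; under [RHS]eq_bigr do rewrite big_split; rewrite big_split /=.
  congr (_ * _); rewrite [RHS](bigD1 i0) //= eqxx /=.
  rewrite [X in _ = _ * X]big1 ?mulr1 // => i ii0.
  by apply: big1 => j _; rewrite (negbTE ii0).
rewrite (eq_bigr _ (fun Z _ => E1 Z)) sum_mx_prod /G (bigD1 i0) //= eqxx /=.
rewrite [X in _ * X = _]big1 ?mulr1 => [|i ii0].
  apply: eq_bigr => j _; case: (A i0 j); rewrite /= ?mulr0 ?mulr1 ?subr0 ?addr0 //; ring.
by apply: big1 => j _; rewrite (negbTE ii0) /= !mulr1 addrC subrK.
Qed.

Theorem lemma7p2 (R : realFieldType) (Q tau : nat)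
    (hQ : (0 < Q)%N) (hQe : ~~ odd Q) (htau : (0 < tau)%N) (htaue : ~~ odd tau)
    (A : 'M[bool]_(Q %/ 2, tau %/ 2)) (lam : R)
    (hlam0 : 0 <= lam) (hlam1 : lam <= 1)
    (hlam : lam < 2 / tau%:R) :
  iid_bern_expect lam (fun Z => (weight (first_ones (mx_and A Z)))%:R)
    >= lam / 2 * (weight A)%:R.
Proof.
set m := (Q %/ 2)%N; set n := (tau %/ 2)%N.
have hn : lam * n%:R <= 1.
  have htau2 : tau = (n * 2)%N by rewrite divnK // dvdn2.
  have tpos : (0 : R) < tau%:R by rewrite ltr0n.
  move: hlam; rewrite ltr_pdivlMr // htau2 natrM => h.
  have : lam * n%:R * 2 < 2 by rewrite -mulrA.
  lra.
have E0 : forall Z : 'M[bool]_(m, n),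
    ((weight (first_ones (mx_and A Z)))%:R : R)
    = \sum_i (1 - \prod_j (if A i j && Z i j then 0 else 1)).
  move=> Z; rewrite weightE natr_sum; apply: eq_bigr => i _.
  rewrite first_row -indic; congr (nat_of_bool _)%:R; apply: eq_existsb => j; by rewrite mxE.
rewrite /iid_bern_expect (eq_bigr _ (fun Z _ => congr1 (fun t => _ * t) (E0 Z))).
under eq_bigr do rewrite mulr_sumr.
rewrite exchange_big /=.
under eq_bigr do (under eq_bigr do rewrite mulrBr mulr1; rewrite sumrB expect_row).
have hp1 : \sum_(Z : 'M[bool]_(m, n)) iid_bern_prob lam Z = 1.
  rewrite /iid_bern_prob (@sum_mx_prod R _ _ (fun i j (b : bool) => if b then lam else 1 - lam)); apply: big1 => i _; apply: big1 => j _.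
  by rewrite addrC subrK.
rewrite hp1 weightE natr_sum mulr_sumr; apply: ler_sum => i _.
set x := fun j => if A i j then lam else 0.
have hx : forall j, 0 <= x j <= 1 by move=> j; rewrite /x; case: (A i j); rewrite ?lexx ?ler01 ?hlam0.
have := @prod_bound R 'I_n (index_enum 'I_n) x hx.
have hs : \sum_j x j = lam * (\sum_j (A i j : nat))%:R.
  rewrite natr_sum mulr_sumr; apply: eq_bigr => j _; rewrite /x; case: (A i j); by rewrite ?mulr1 ?mulr0.
have hs1 : \sum_j x j <= 1.
  apply: le_trans hn; rewrite hs; apply: ler_wpM2l => //; rewrite ler_nat.
  rewrite -[X in (_ <= X)%N]card_ord -sum1_card; apply: leq_sum => j _; exact: leq_b1.
have hs0 : 0 <= \sum_j x j by apply: sumr_ge0 => j _; have /andP[] := hx j.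
have -> : lam / 2 * (\sum_j (A i j : nat))%:R = (\sum_j x j) / 2 by rewrite hs; ring.
rewrite (_ : \prod_j (1 - (if A i j then lam else 0)) = \prod_j (1 - x j)) //.
move: hs0 hs1; set s := \sum_j x j; set P := \prod_j _.
move=> hs0 hs1 hP.
have : s ^+ 2 <= s by rewrite expr2 ler_piMl.
nra.
Qed.
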